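(* Let $\kappa$ be an infinite cardinal and let $S$ be the lattice of all finite subsets of $\kappa$ (ordered by inclusion). Then $\mathrm{ch}\text{-}\mathrm{Id}(S)$ is a lattice, and if $\kappa=\lambda^{\aleph_0}$ for some cardinal $\lambda$, then there exists a surjective upper semilattice homomorphism from $S$ onto $\mathrm{ch}\text{-}\mathrm{Id}(S)$ (regarded as an upper semilattice under its lattice join).
   Context: For a poset $P$ and $X\subseteq P$, write $P\downarrow X=\{y\in P\mid\exists x\in X,\ y\le x\}$. An ideal of $P$ is a (possibly empty) upward directed downset of $P$. $\mathrm{ch}\text{-}\mathrm{Id}(P)$ denotes the poset, ordered by inclusion, of all ideals of $P$ of the form $P\downarrow C$ with $C\subseteq P$ a chain (possibly empty). *)

(* Defs.v *)
From mathcomp Require Import all_boot.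
From mathcomp Require Export boolp classical_sets cardinality.
Set Implicit Arguments. Unset Strict Implicit. Unset Printing Implicit Defensive.
Local Open Scope classical_set_scope.

Section PosetNotions.
Variables (P : Type) (le : P -> P -> Prop).

Definition down (X : set P) : set P := fun y => exists x, X x /\ le y x.

Definition is_downset (I : set P) : Prop :=
  forall x y, I x -> le y x -> I y.

Definition is_updirected (I : set P) : Prop :=
  forall x y, I x -> I y -> exists z, I z /\ le x z /\ le y z.

(** ideal: possibly empty, upward directed downset *)
Definition is_ideal (I : set P) : Prop := is_downset I /\ is_updirected I.

Definition is_chain (C : set P) : Prop :=
  forall x y, C x -> C y -> le x y \/ le y x.

Definition chId (I : set P) : Prop :=
  is_ideal I /\ exists C : set P, is_chain C /\ I = down C.
End PosetNotions.

Definition is_lub_in {T} (Q : set T -> Prop) (I J U : set T) : Prop :=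
  Q U /\ I `<=` U /\ J `<=` U /\
  forall V, Q V -> I `<=` V -> J `<=` V -> U `<=` V.

Definition is_glb_in {T} (Q : set T -> Prop) (I J U : set T) : Prop :=
  Q U /\ U `<=` I /\ U `<=` J /\
  forall V, Q V -> V `<=` I -> V `<=` J -> V `<=` U.

Definition is_lattice_incl {T} (Q : set T -> Prop) : Prop :=
  forall I J, Q I -> Q J ->
    (exists U, is_lub_in Q I J U) /\ (exists W, is_glb_in Q I J W).

Definition finsub (K : Type) : Type := {A : set K | finite_set A}.
Definition finsub_le (K : Type) (s t : finsub K) : Prop := proj1_sig s `<=` proj1_sig t.

(* Main.v *)
Require Import Defs.
From mathcomp Require Import all_boot.
From mathcomp Require Import boolp classical_sets cardinality.
Local Open Scope classical_set_scope. Local Open Scope card_scope.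

Set Implicit Arguments. Unset Strict Implicit. Unset Printing Implicit Defensive.

Definition Fin {K} (U : set K) : set (finsub K) := fun s => proj1_sig s `<=` U.

Lemma fin_ind {T} (Q : set T -> Prop) : Q set0 ->
  (forall s x, Q s -> Q (x |` s)) -> forall s, finite_set s -> Q s.
Proof.
move=> Q0 QS s [n]; elim: n s => [|n IH] s.
  by rewrite II0 card_eq0 => /eqP ->.
by move=> /eq_cardSP [x sx /IH Qs]; rewrite -(setD1K sx); exact: QS.
Qed.

Lemma finsub_eq {K} (s t : finsub K) : proj1_sig s = proj1_sig t -> s = t.
Proof.
case: s => s hs; case: t => t ht /= e; subst t; congr exist; exact: Prop_irrelevance.
Qed.

Lemma covered_chain {K} (C : set (finsub K)) : is_chain (@finsub_le K) C ->
  (exists c, C c) -> forall s, finite_set s ->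
  s `<=` \bigcup_(c in C) proj1_sig c -> exists c, C c /\ s `<=` proj1_sig c.
Proof.
move=> hC [c0 Cc0]; apply: fin_ind.
  by move=> _; exists c0; split => //; exact: sub0set.
move=> s x IH sub.
have [c [Cc sc]] := IH (subset_trans (@subsetUr _ [set x] s) sub).
have [c' Cc' xc'] := sub x (or_introl erefl).
have [le1|le2] := hC c c' Cc Cc'.
  exists c'; split => // y [->|sy]//; exact: le1 _ (sc _ sy).
exists c; split => // y [->|sy]; [exact: le2 | exact: sc].
Qed.

Lemma downC {K} (C : set (finsub K)) : is_chain (@finsub_le K) C ->
  (exists c, C c) -> Defs.down (@finsub_le K) C = Fin (\bigcup_(c in C) proj1_sig c).
Proof.
move=> hC hne; apply/seteqP; split => s.
  by case=> c [Cc sc] x /sc cx; exists c.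
move=> hs; have [c [Cc sc]] := covered_chain hC hne (proj2_sig s) hs.
by exists c.
Qed.

Lemma Fin_ideal {K} (U : set K) : is_ideal (@finsub_le K) (Fin U).
Proof.
split.
  by move=> s t hs ts x /ts /hs.
move=> s t hs ht.
have fU : finite_set (proj1_sig s `|` proj1_sig t).
  by rewrite finite_setU; split; exact: proj2_sig.
exists (exist _ _ fU); split; last split.
- by move=> x [/hs|/ht].
- exact: subsetUl.
- exact: subsetUr.
Qed.

Lemma chId0 {K} : chId (@finsub_le K) set0.
Proof.
split; first by split => [x y []|x y []].
exists set0; split => //.
by apply/seteqP; split => s; [by [] | by case=> x []].
Qed.

Lemma countableU {T} (A B : set T) : countable A -> countable B -> countable (A `|` B).
Proof.
move=> cA cB.
have : countable (\bigcup_(b in [set: bool]) (if b then A else B)).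
  by apply: bigcup_countable => // -[].
apply: sub_countable; apply: subset_card_le => x [Ax|Bx].
  by exists true.
by exists false.
Qed.

Lemma enum_countable {K} (U : set K) (u : K) : countable U -> U u ->
  exists h : nat -> K, range h = U.
Proof.
move=> /countable_injP [e he] Uu.
pose h n := if pselect (exists x, U x /\ e x = n) is left H then projT1 (cid H) else u.
exists h; apply/seteqP; split.
  move=> _ [n _ <-]; rewrite /h; case: pselect => [H|//].
  by case: (projT2 (cid H)).
move=> x Ux; exists (e x) => //; rewrite /h; case: pselect => [H|[]]; last by exists x.
case: (projT2 (cid H)) => U1 e1; apply: he => //; exact: mem_set.
Qed.

Lemma chId_Fin {K} (U : set K) : countable U -> chId (@finsub_le K) (Fin U).
Proof.
move=> cU; split; first exact: Fin_ideal.
case: (pselect (exists u, U u)) => [[u Uu]|nU].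
  have [h hU] := enum_countable cU Uu.
  pose C : set (finsub K) := fun c => exists n, proj1_sig c = h @` `I_n.
  have hC : is_chain (@finsub_le K) C.
    move=> c1 c2 [n1 e1] [n2 e2]; rewrite /finsub_le e1 e2.
    have [le|le] := leqP n1 n2; [left|right]; apply: image_subset => k /= hk.
      exact: leq_trans hk le.
    exact: ltn_trans hk le.
  have hne : exists c, C c.
    by exists (exist _ _ (finite_image h (finite_II 0))); exists 0%N.
  exists C; split => //; rewrite downC //; congr Fin.
  rewrite -hU; apply/seteqP; split; last first.
    by move=> x [c [n e]]; rewrite e => -[i _ <-]; exists i.
  move=> _ [i _ <-].
  exists (exist _ _ (finite_image h (finite_II i.+1))); first by exists i.+1.
  by exists i => //=.
have U0 : U = set0 by apply/seteqP; split => // x Ux; apply: nU; exists x.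
pose C : set (finsub K) := fun c => proj1_sig c = set0.
exists C; split.
  by move=> c1 c2 e1 e2; left; rewrite /finsub_le e1 e2.
apply/seteqP; split => s.
  rewrite /Fin U0 => hs; exists (exist _ _ (finite_set0 K)); split => //.
by case=> c [Cc sc]; rewrite /Fin U0 -Cc.
Qed.

Lemma sameCard {T} (A B : set T) n : A `<=` B -> A #= `I_n -> B #= `I_n -> A = B.
Proof.
move=> AB hA hB; apply/seteqP; split => // x Bx.
apply: contrapT => nAx.
have h1 : (x |` A) #= `I_n.+1.
  apply/eq_cardSP; exists x; first by left.
  suff -> : (x |` A) `\ x = A by [].
  apply/seteqP; split => y.
    by case=> -[->|//] /=.
  by move=> Ay; split; [right | move=> /= e; subst y].
have h2 : (x |` A) #<= B by apply: subset_card_le => y [->|/AB].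
move: h2; rewrite (card_le_eql h1) (card_le_eqr hB) card_le_II.
by rewrite ltnn.
Qed.

Lemma countable_chain {K} (C : set (finsub K)) : is_chain (@finsub_le K) C ->
  countable C.
Proof.
move=> hC; apply/countable_injP.
pose sz := fun c : finsub K => cid (proj2_sig c : exists n, proj1_sig c #= `I_n).
exists (fun c => projT1 (sz c)) => c1 c2 /set_mem C1 /set_mem C2 e.
apply: finsub_eq.
move: (projT2 (sz c1)) (projT2 (sz c2)); rewrite e => h1 h2.
have [le|le] := hC _ _ C1 C2.
  exact: sameCard le h1 h2.
by apply/esym; apply: sameCard le h2 h1.
Qed.

Lemma chId_cases {K} (I : set (finsub K)) : chId (@finsub_le K) I ->
  I = set0 \/ exists U, countable U /\ I = Fin U.
Proof.
move=> [_ [C [hC ->]]].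
case: (pselect (exists c, C c)) => [hne|nC].
  right; exists (\bigcup_(c in C) proj1_sig c); split; last exact: downC.
  apply: bigcup_countable; first exact: countable_chain.
  by move=> c _; apply: finite_set_countable; exact: proj2_sig.
left; apply/seteqP; split => s //; case=> c [Cc _]; apply: nC; by exists c.
Qed.

Lemma lub_Fin {K} (A B : set K) : countable A -> countable B ->
  is_lub_in (chId (@finsub_le K)) (Fin A) (Fin B) (Fin (A `|` B)).
Proof.
move=> cA cB; split; first exact/chId_Fin/countableU.
split; first by move=> s hs; apply: subset_trans hs (@subsetUl _ _ _).
split; first by move=> s hs; apply: subset_trans hs (@subsetUr _ _ _).
move=> V [[dV uV] _] hA hB s hs.
have fA : finite_set (proj1_sig s `&` A) by apply: finite_setIl; exact: proj2_sig.
have fB : finite_set (proj1_sig s `&` B) by apply: finite_setIl; exact: proj2_sig.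
have VA : V (exist _ _ fA) by apply: hA => x [].
have VB : V (exist _ _ fB) by apply: hB => x [].
have [z [Vz [zA zB]]] := uV _ _ VA VB.
apply: dV Vz _ => x sx; case: (hs x sx) => [Ax|Bx].
  exact: zA.
exact: zB.
Qed.

Lemma lub0l {K} (J : set (finsub K)) : chId (@finsub_le K) J ->
  is_lub_in (chId (@finsub_le K)) set0 J J.
Proof. by move=> hJ; split => //; split => //; split. Qed.

Lemma lub0r {K} (J : set (finsub K)) : chId (@finsub_le K) J ->
  is_lub_in (chId (@finsub_le K)) J set0 J.
Proof. by move=> hJ; split => //; split => //; split. Qed.

Lemma lattice_part {K} : is_lattice_incl (chId (@finsub_le K)).
Proof.
move=> I J hI hJ; split.
  case: (chId_cases hI) => [->|[A [cA ->]]]; first by exists J; exact: lub0l.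
  case: (chId_cases hJ) => [->|[B [cB ->]]]; first by exists (Fin A); exact: lub0r (chId_Fin cA).
  by exists (Fin (A `|` B)); exact: lub_Fin.
case: (chId_cases hI) => [->|[A [cA eI]]].
  by exists set0; split; [exact: chId0 | split => //; split].
case: (chId_cases hJ) => [->|[B [cB eJ]]].
  by exists set0; split; [exact: chId0 | split => //; split].
exists (Fin (A `&` B)); split.
  apply: chId_Fin; apply: sub_countable cA; apply: subset_card_le; exact: subIsetl.
rewrite eI eJ; split; first by move=> s hs x /hs [].
split; first by move=> s hs x /hs [].
by move=> V _ h1 h2 s Vs x sx; split; [exact: h1 Vs x sx | exact: h2 Vs x sx].
Qed.

Lemma two_elems {K} : infinite_set [set: K] -> exists a b : K, a <> b.
Proof.
move=> hK; have [a _] := infinite_setN0 hK.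
case: (pselect (exists b, b <> a)) => [[b hb]|nb]; first by exists a, b => e; apply: hb.
exfalso; apply: hK.
suff -> : [set: K] = [set a] by exact: finite_set1.
apply/seteqP; split => // x _; apply: contrapT => hx; apply: nb; by exists x.
Qed.

Lemma g_exists {K} (L : Type) (G : (nat -> L) -> K) : bijective G ->
  (exists a b : K, a <> b) ->
  exists g : K -> set K, (forall k, countable (g k)) /\
    (forall V, countable V -> exists k, g k = V).
Proof.
case=> Gi GK KG [a [b ab]].
pose W (k : K) (i : nat) := G (fun j : nat => Gi k (pickle (i, j))).
pose g k := if pselect (W k 0%N = W k 1%N) is left _ then set0
            else range (fun n => W k n.+2).
have enc : forall w : nat -> K, exists k, W k = w.
  move=> w.
  exists (G (fun m => match unpickle m with Some (i, j) => Gi (w i) j | None => Gi a 0%N end)).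
  apply: funext => i; rewrite /W GK.
  have -> : (fun j => match unpickle (pickle (i, j)) with
                     | Some (i0, j0) => Gi (w i0) j0 | None => Gi a 0%N end) = Gi (w i).
    by apply: funext => j; rewrite pickleK.
  by rewrite KG.
exists g; split.
  move=> k; rewrite /g; case: pselect => _ //; exact: card_image_le.
move=> V cV.
case: (pselect (exists v, V v)) => [[v Vv]|nV].
  have [h hV] := enum_countable cV Vv.
  have [k hk] := enc (fun n => match n with 0 => a | 1 => b | n'.+2 => h n' end).
  exists k; rewrite /g hk; case: pselect => [//|_].
  by rewrite -hV.
have [k hk] := enc (fun _ => a).
exists k; rewrite /g hk; case: pselect => [_|[]//].
apply/seteqP; split => // x Vx; apply: nV; by exists x.
Qed.

Theorem lemma3p3 (K : Type) (hK : infinite_set [set: K]) :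
  is_lattice_incl (@chId (finsub K) (@finsub_le K)) /\
  ((exists (L : Type) (g : (nat -> L) -> K), bijective g) ->
   exists f : finsub K -> set (finsub K),
     (forall s, chId (@finsub_le K) (f s)) /\
     (forall I, chId (@finsub_le K) I -> exists s, f s = I) /\
     (forall s t u : finsub K,
        proj1_sig u = proj1_sig s `|` proj1_sig t ->
        is_lub_in (@chId (finsub K) (@finsub_le K)) (f s) (f t) (f u))).
Proof.
split; first exact: lattice_part.
move=> [L [G bG]].
have [g [cg sg]] := g_exists bG (two_elems hK).
pose A (s : finsub K) := \bigcup_(x in proj1_sig s) g x.
pose f s := if pselect (proj1_sig s = set0) is left _ then set0 else Fin (A s).
have cA : forall s, countable (A s).
  move=> s; apply: bigcup_countable => [|x _]; last exact: cg.
  apply: finite_set_countable; exact: proj2_sig.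
have fchId : forall s, chId (@finsub_le K) (f s).
  by move=> s; rewrite /f; case: pselect => _; [exact: chId0 | exact: chId_Fin].
have f0 : forall s, proj1_sig s = set0 -> f s = set0.
  by move=> s e; rewrite /f; case: pselect.
have fN : forall s, proj1_sig s <> set0 -> f s = Fin (A s).
  by move=> s e; rewrite /f; case: pselect.
exists f; split; first exact: fchId.
split.
  move=> I /chId_cases [->|[V [cV ->]]].
    by exists (exist _ set0 (finite_set0 K)); rewrite f0.
  have [k gk] := sg V cV.
  exists (exist _ [set k] (finite_set1 k)); rewrite fN /=.
    by rewrite /A /= bigcup_set1 gk.
  by move=> e; have : [set k] k by []; rewrite e.
move=> s t u hu.
case: (pselect (proj1_sig s = set0)) => [s0|s0].
  have -> : u = t by apply: finsub_eq; rewrite hu s0 set0U.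
  rewrite (f0 s s0); exact: lub0l.
case: (pselect (proj1_sig t = set0)) => [t0|t0].
  have -> : u = s by apply: finsub_eq; rewrite hu t0 setU0.
  rewrite (f0 t t0); exact: lub0r.
rewrite (fN s s0) (fN t t0) fN; last by rewrite hu setU_eq0 => -[].
by rewrite /A hu bigcup_setU; exact: (lub_Fin (cA s) (cA t)).
Qed.
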